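(* Consider the algorithm CAB described in the context, and suppose that for all users $i\in\mathcal U$, all $\boldsymbol{x}\in\mathbb R^d$ and all $s\ge0$, $|\boldsymbol{w}_{i,s}^\top\boldsymbol{x}-\boldsymbol{u}_i^\top\boldsymbol{x}|\le\mathrm{CB}_{i,s}(\boldsymbol{x})$. Let $t\le T$ and let $\boldsymbol{x}_t^*\in\arg\max_{\boldsymbol{x}\in C_t}\boldsymbol{u}_{i_t}^\top\boldsymbol{x}$. Then the instantaneous regret of CAB at round $t$ satisfies \[ r_t\le(3\alpha(T)+2)\Big(\mathbf 1\{\widehat N_{i_t,t}(\boldsymbol{x}_t^* )\ne N_{i_t}(\boldsymbol{x}_t^* )\}+\mathbf 1\{\widehat N_{i_t,t}(\bar{\boldsymbol{x}}_t)\ne N_{i_t}(\bar{\boldsymbol{x}}_t)\}\Big)+2\,\mathrm{CB}_{N_{i_t}(\bar{\boldsymbol{x}}_t),t-1}(\bar{\boldsymbol{x}}_t). \]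
   Context: Model. Users $\mathcal U=\{1,\dots,n\}$ with unknown unit vectors $\boldsymbol{u}_i\in\mathbb R^d$; $N_i(\boldsymbol{x})=\{j:\boldsymbol{u}_j^\top\boldsymbol{x}=\boldsymbol{u}_i^\top\boldsymbol{x}\}$. At round $t$ the learner receives $i_t$ and $C_t=\{\boldsymbol{x}_{t,1},..,\boldsymbol{x}_{t,c_t}\}$ with $\|\boldsymbol{x}_{t,k}\|\le1$, picks $\bar{\boldsymbol{x}}_t\in C_t$, observes $y_t\in[-1,1]$. Regret $r_t=\max_{\boldsymbol{x}\in C_t}\boldsymbol{u}_{i_t}^\top\boldsymbol{x}-\boldsymbol{u}_{i_t}^\top\bar{\boldsymbol{x}}_t$. Algorithm CAB (parameters $\gamma>0$, positive nondecreasing function $\alpha$). Initialize $\boldsymbol{b}_{i,0}=\boldsymbol0$, $M_{i,0}=I_d$; $\boldsymbol{w}_{i,s}=M_{i,s}^{-1}\boldsymbol{b}_{i,s}$, $\mathrm{CB}_{i,s}(\boldsymbol{x})=\alpha(s)\sqrt{\boldsymbol{x}^\top M_{i,s}^{-1}\boldsymbol{x}}$; for nonempty $N\subseteq\mathcal U$, $\boldsymbol{w}_{N,s}=\frac1{|N|}\sum_{j\in N}\boldsymbol{w}_{j,s}$, $\mathrm{CB}_{N,s}(\boldsymbol{x})=\frac1{|N|}\sum_{j\in N}\mathrm{CB}_{j,s}(\boldsymbol{x})$. At round $t$, for any $\boldsymbol{x}$ the estimated neighborhood is $\widehat N_{i_t,t}(\boldsymbol{x})=\{j:|\boldsymbol{w}_{i_t,t-1}^\top\boldsymbol{x}-\boldsymbol{w}_{j,t-1}^\top\boldsymbol{x}|\le\mathrm{CB}_{i_t,t-1}(\boldsymbol{x})+\mathrm{CB}_{j,t-1}(\boldsymbol{x})\}$;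 CAB chooses $\bar{\boldsymbol{x}}_t=\boldsymbol{x}_{t,k_t}$ with $k_t\in\arg\max_k(\boldsymbol{w}_{\widehat N_{i_t,t}(\boldsymbol{x}_{t,k}),t-1}^\top\boldsymbol{x}_{t,k}+\mathrm{CB}_{\widehat N_{i_t,t}(\boldsymbol{x}_{t,k}),t-1}(\boldsymbol{x}_{t,k}))$. Update: if $\mathrm{CB}_{i_t,t-1}(\bar{\boldsymbol{x}}_t)\ge\gamma/4$, only user $i_t$ is updated by $M\leftarrow M+\bar{\boldsymbol{x}}_t\bar{\boldsymbol{x}}_t^\top$, $\boldsymbol b\leftarrow\boldsymbol b+y_t\bar{\boldsymbol{x}}_t$; otherwise this update is applied to every $j\in\widehat N_{i_t,t}(\bar{\boldsymbol{x}}_t)$ with $\mathrm{CB}_{j,t-1}(\bar{\boldsymbol{x}}_t)<\gamma/4$; others unchanged. *)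

(* Defs.v *)
From mathcomp Require Import all_boot all_order all_algebra.
Set Implicit Arguments. Unset Strict Implicit. Unset Printing Implicit Defensive.
Import Order.TTheory GRing.Theory Num.Theory.
Local Open Scope ring_scope.

(* An instance of the problem + a run of CAB: parameters alpha, gamma,
   the unknown user vectors u_i, the served user i_t, the context sets C_t,
   the observed rewards y_t and the chosen items xbar_t (rounds t = 1, 2, ...). *)
Record cab_inst (R : rcfType) (d n : nat) := CabInst {
  alpha  : nat -> R;
  gamma  : R;
  uvec   : 'I_n -> 'cV[R]_d;
  user   : nat -> 'I_n;
  ctx    : nat -> seq 'cV[R]_d;
  obs    : nat -> R;
  choice : nat -> 'cV[R]_d }.

Section CAB.
Variables (R : rcfType) (d n : nat) (E : cab_inst R d n).

Definition dotv (u x : 'cV[R]_d) : R := (u^T *m x) 0 0.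

(* per-user statistics (M_i, b_i) *)
Definition cstate := 'I_n -> 'M[R]_d * 'cV[R]_d.

Definition west (st : cstate) (j : 'I_n) : 'cV[R]_d := invmx (st j).1 *m (st j).2.

Definition CBst (st : cstate) (s : nat) (j : 'I_n) (x : 'cV[R]_d) : R :=
  alpha E s * Num.sqrt ((x^T *m invmx (st j).1 *m x) 0 0).

Definition Nhatst (st : cstate) (s : nat) (i : 'I_n) (x : 'cV[R]_d) : {set 'I_n} :=
  [set j | `|dotv (west st i) x - dotv (west st j) x| <= CBst st s i x + CBst st s j x].

Definition upd (t : nat) (prev : cstate) (j : 'I_n) : bool :=
  let x := choice E t in
  let i := user E t in
  if gamma E / 4%:R <= CBst prev t.-1 i x then j == i
  else (j \in Nhatst prev t.-1 i x) && (CBst prev t.-1 j x < gamma E / 4%:R).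

Fixpoint state (s : nat) : cstate :=
  match s with
  | 0 => fun _ => (1%:M, 0)
  | s'.+1 => fun j =>
      let prev := state s' in
      if upd s'.+1 prev j then
        ((prev j).1 + choice E s'.+1 *m (choice E s'.+1)^T,
         (prev j).2 + obs E s'.+1 *: choice E s'.+1)
      else prev j
  end.

Definition w (s : nat) (j : 'I_n) : 'cV[R]_d := west (state s) j.
Definition CB (s : nat) (j : 'I_n) (x : 'cV[R]_d) : R := CBst (state s) s j x.

Definition wN (s : nat) (N : {set 'I_n}) : 'cV[R]_d :=
  (#|N|%:R)^-1 *: \sum_(j in N) w s j.
Definition CBN (s : nat) (N : {set 'I_n}) (x : 'cV[R]_d) : R :=
  (#|N|%:R)^-1 * \sum_(j in N) CB s j x.

Definition Nhat (t : nat) (x : 'cV[R]_d) : {set 'I_n} :=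
  Nhatst (state t.-1) t.-1 (user E t) x.

Definition Ntrue (i : 'I_n) (x : 'cV[R]_d) : {set 'I_n} :=
  [set j | dotv (uvec E j) x == dotv (uvec E i) x].

Definition score (t : nat) (x : 'cV[R]_d) : R :=
  dotv (wN t.-1 (Nhat t x)) x + CBN t.-1 (Nhat t x) x.

End CAB.

(* Main.v *)
Require Import Defs.
From mathcomp Require Import all_boot all_order all_algebra.
From mathcomp Require Import ring lra.
Import Order.TTheory GRing.Theory Num.Theory.
Local Open Scope ring_scope.

Lemma dotvE (R : rcfType) (d : nat) (u x : 'cV[R]_d) :
  dotv u x = \sum_k u k 0 * x k 0.
Proof. by rewrite /dotv !mxE; apply: eq_bigr => k _; rewrite !mxE. Qed.

Lemma dotvZ (R : rcfType) (d : nat) (a : R) (u x : 'cV[R]_d) :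
  dotv (a *: u) x = a * dotv u x.
Proof.
rewrite !dotvE mulr_sumr; apply: eq_bigr => k _; rewrite !mxE mulrA.
by [].
Qed.

Lemma dotv_sum (R : rcfType) (d n : nat) (N : {set 'I_n}) (f : 'I_n -> 'cV[R]_d) x :
  dotv (\sum_(j in N) f j) x = \sum_(j in N) dotv (f j) x.
Proof.
rewrite dotvE.
under eq_bigr => k _ do rewrite summxE mulr_suml.
rewrite exchange_big; apply: eq_bigr => j _; by rewrite dotvE.
Qed.

Lemma cs_half (R : rcfType) (d : nat) (u x : 'cV[R]_d) (c : R) :
  c ^+ 2 = 1 -> 2%:R * c * dotv u x <= dotv u u + dotv x x.
Proof.
move=> Hc.
have H0 : 0 <= \sum_k (u k 0 - c * x k 0) ^+ 2 by apply: sumr_ge0 => k _; apply: sqr_ge0.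
have E : \sum_k (u k 0 - c * x k 0) ^+ 2 =
   dotv u u + dotv x x - 2%:R * c * dotv u x.
  rewrite !dotvE mulr_sumr -big_split /= -sumrB; apply: eq_bigr => k _.
  have -> : (u k 0 - c * x k 0) ^+ 2 = u k 0 * u k 0 + c ^+ 2 * (x k 0 * x k 0)
      - 2%:R * c * (u k 0 * x k 0) by ring.
  by rewrite Hc mul1r.
by move: H0; rewrite E subr_ge0.
Qed.

Lemma avg_ge (R : rcfType) (n : nat) (N : {set 'I_n}) (f : 'I_n -> R) lo :
  (0 < #|N|)%N -> (forall j, j \in N -> lo <= f j) ->
  lo <= (#|N|%:R)^-1 * \sum_(j in N) f j.
Proof.
move=> Hc Hf.
have pos : 0 < (#|N|%:R : R) by rewrite ltr0n.
rewrite ler_pdivlMl //.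
have : \sum_(j in N) lo <= \sum_(j in N) f j by apply: ler_sum.
by rewrite sumr_const mulr_natl.
Qed.

Lemma avg_le (R : rcfType) (n : nat) (N : {set 'I_n}) (f : 'I_n -> R) hi :
  (0 < #|N|)%N -> (forall j, j \in N -> f j <= hi) ->
  (#|N|%:R)^-1 * \sum_(j in N) f j <= hi.
Proof.
move=> Hc Hf.
have pos : 0 < (#|N|%:R : R) by rewrite ltr0n.
rewrite ler_pdivrMl //.
have : \sum_(j in N) f j <= \sum_(j in N) hi by apply: ler_sum.
by rewrite sumr_const mulr_natl.
Qed.

Lemma score_avg (R : rcfType) (d n : nat) (E : cab_inst R d n) s N x :
  dotv (wN E s N) x + CBN E s N x =
  (#|N|%:R)^-1 * \sum_(j in N) (dotv (w E s j) x + CB E s j x).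
Proof. by rewrite /wN /CBN dotvZ dotv_sum big_split /= mulrDr. Qed.

Theorem lemma4 (R : rcfType) (d n : nat) (E : cab_inst R d n)
  (Hgamma : 0 < gamma E)
  (Halpha_pos : forall s, 0 < alpha E s)
  (Halpha_mono : forall s s', (s <= s')%N -> alpha E s <= alpha E s')
  (Hu : forall i, dotv (uvec E i) (uvec E i) = 1)
  (Hctx : forall s, (0 < s)%N ->
     ctx E s != [::] /\ (forall x, x \in ctx E s -> dotv x x <= 1))
  (Hobs : forall s, (0 < s)%N -> -1 <= obs E s <= 1)
  (Hchoice : forall s, (0 < s)%N ->
     choice E s \in ctx E s /\
     (forall x, x \in ctx E s -> score E s x <= score E s (choice E s)))
  (Hconf : forall (i : 'I_n) (x : 'cV[R]_d) (s : nat),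
     `|dotv (w E s i) x - dotv (uvec E i) x| <= CB E s i x)
  (t T : nat) (Ht : (1 <= t <= T)%N)
  (xstar : 'cV[R]_d) (Hxs : xstar \in ctx E t)
  (Hmax : forall x, x \in ctx E t ->
     dotv (uvec E (user E t)) x <= dotv (uvec E (user E t)) xstar) :
  dotv (uvec E (user E t)) xstar - dotv (uvec E (user E t)) (choice E t)
  <= (3%:R * alpha E T + 2%:R) *
       ((Nhat E t xstar != Ntrue E (user E t) xstar)%:R
        + (Nhat E t (choice E t) != Ntrue E (user E t) (choice E t))%:R)
     + 2%:R * CBN E t.-1 (Ntrue E (user E t) (choice E t)) (choice E t).
Proof.
have t0 : (0 < t)%N by case/andP: Ht.
have [Hxb Hsc] := Hchoice t t0.
have [_ Hnorm] := Hctx t t0.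
set i := user E t; set xb := choice E t.
have CBge0 : forall s j x, 0 <= CB E s j x.
  move=> s j x; rewrite /CB /CBst; apply: mulr_ge0; last exact: sqrtr_ge0.
  exact: ltW.
have CBNge0 : forall s N x, 0 <= CBN E s N x.
  move=> s N x; rewrite /CBN; apply: mulr_ge0; first by rewrite invr_ge0 ler0n.
  by apply: sumr_ge0 => j _.
have ub : forall x, x \in ctx E t -> dotv (uvec E i) x <= 1.
  move=> x hx; have := @cs_half _ _ (uvec E i) x 1 (expr1n _ _).
  rewrite Hu mulr1 => h; have := Hnorm x hx; lra.
have lb : forall x, x \in ctx E t -> - 1 <= dotv (uvec E i) x.
  move=> x hx; have := @cs_half _ _ (uvec E i) x (-1) (ltac:(by rewrite sqrrN expr1n)).
  rewrite Hu mulrN1 => h; have := Hnorm x hx; lra.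
have bound : dotv (uvec E i) xstar - dotv (uvec E i) xb <= 2%:R.
  have := ub _ Hxs; have := lb _ Hxb; lra.
have aT := Halpha_pos T.
have C0 := CBNge0 t.-1 (Ntrue E i xb) xb.
have iN : forall x, (0 < #|Ntrue E i x|)%N.
  by move=> x; apply/card_gt0P; exists i; rewrite inE.
case: (eqVneq (Nhat E t xstar) (Ntrue E i xstar)) => H1; last first.
  rewrite /=; case: (_ != _); rewrite /= ?mulr1 ?addr0; nra.
case: (eqVneq (Nhat E t xb) (Ntrue E i xb)) => H2; last first.
  rewrite /= add0r mulr1; nra.
rewrite /= addr0 mulr0 add0r.
have Hs := Hsc xstar Hxs.
move: Hs; rewrite /score -/xb H1 H2 !score_avg => Hs.
have L : dotv (uvec E i) xstar <= (#|Ntrue E i xstar|%:R)^-1 *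
   \sum_(j in Ntrue E i xstar) (dotv (w E t.-1 j) xstar + CB E t.-1 j xstar).
  apply: avg_ge => // j; rewrite inE => /eqP hj.
  have := Hconf j xstar t.-1; rewrite ler_norml hj; lra.
have U : (#|Ntrue E i xb|%:R)^-1 *
   \sum_(j in Ntrue E i xb) (dotv (w E t.-1 j) xb + CB E t.-1 j xb) <=
   (#|Ntrue E i xb|%:R)^-1 *
   \sum_(j in Ntrue E i xb) (dotv (uvec E i) xb + 2%:R * CB E t.-1 j xb).
  rewrite ler_pM2l ?invr_gt0 ?ltr0n //; apply: ler_sum => j; rewrite inE => /eqP hj.
  have := Hconf j xb t.-1; rewrite ler_norml hj; lra.
have V : (#|Ntrue E i xb|%:R)^-1 *
   \sum_(j in Ntrue E i xb) (dotv (uvec E i) xb + 2%:R * CB E t.-1 j xb) =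
   dotv (uvec E i) xb + 2%:R * CBN E t.-1 (Ntrue E i xb) xb.
  have pos : (#|Ntrue E i xb|%:R : R) != 0 by rewrite pnatr_eq0 -lt0n.
  rewrite big_split /= sumr_const -mulr_sumr /CBN -mulr_natr; field.
  done.
lra.
Qed.
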